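(* Let $K$ be a field of characteristic $0$, let $E$ be the infinite-dimensional unitary Grassmann algebra over $K$ with even part $E_0$, let $A=\begin{pmatrix} E_0 & E\\ 0 & E\end{pmatrix}$, and let $F_n(A)=K\langle x_1,\dots,x_n\rangle/(K\langle x_1,\dots,x_n\rangle\cap T(A))$. Let $n\geq 2$ be even and $m\geq n+2$. Then the polynomial \[f_{m,n+1}^{(3)}=\sum_{\sigma\in S_{n+1}}(-1)^{\sigma}[x_{\sigma(1)},x_1,\dots,x_1][x_{\sigma(2)},x_{\sigma(3)}]\cdots[x_{\sigma(n)},x_{\sigma(n+1)}],\] where each first factor is the left-normed commutator of length $m-n$ consisting of $x_{\sigma(1)}$ followed by $m-n-1$ copies of $x_1$, is not a polynomial identity of $F_n(A)$.
   Context: All algebras are associative and unitary over $K$; $T(A)$ is the ideal of polynomial identities of $A$. $E$ is generated by anticommuting $e_1,e_2,\dots$ and $E_0$ is the span of basis products of even length. Commutators: $[a,b]=ab-ba$, $[a_1,\dots,a_k]=[[a_1,\dots,a_{k-1}],a_k]$; $(-1)^\sigma$ is the sign of $\sigma$. The polynomial has total degree $m$. *)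

(* Defs.v *)
From mathcomp Require Import all_boot all_order all_algebra all_fingroup.
Set Implicit Arguments. Unset Strict Implicit. Unset Printing Implicit Defensive.
Import GRing.Theory.
Local Open Scope ring_scope.

Section Defs.
Variable K : fieldType.

(* An element of E is presented as a formal finite sum of pairs (c, w),
   meaning c * e_{w_1} e_{w_2} ... e_{w_k}  (w a word in the generators). *)
Definition grass := seq (K * seq nat).

Fixpoint ninv (w : seq nat) : nat :=
  if w is x :: s then (count (fun y => y < x)%N s + ninv s)%N else 0%N.

(* Coefficient of the basis element e_S (S strictly increasing) in x:
   e_{w_1}...e_{w_k} = 0 if w has a repeated letter, and otherwise equals
   (-1)^{inv w} e_{sort w}  (anticommutativity). *)
Definition gcoef (x : grass) (S : seq nat) : K :=
  \sum_(p <- x | uniq p.2 && (sort leq p.2 == S)) (-1) ^+ ninv p.2 * p.1.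

Definition gis0 (x : grass) : Prop := forall S, gcoef x S = 0.
Definition inE0 (x : grass) : Prop := forall S, odd (size S) -> gcoef x S = 0.

Definition gadd (x y : grass) : grass := x ++ y.
Definition gmul (x y : grass) : grass :=
  [seq (p.1 * q.1, p.2 ++ q.2) | p <- x, q <- y].
Definition gcst (c : K) : grass := [:: (c, [::])].

(* (a, b, c) stands for the matrix [[a, b], [0, c]]. *)
Definition Aelt := (grass * grass * grass)%type.
Definition inA (u : Aelt) : Prop := inE0 u.1.1.
Definition Ais0 (u : Aelt) : Prop := [/\ gis0 u.1.1, gis0 u.1.2 & gis0 u.2].
Definition Aadd (u v : Aelt) : Aelt :=
  (gadd u.1.1 v.1.1, gadd u.1.2 v.1.2, gadd u.2 v.2).
Definition Amul (u v : Aelt) : Aelt :=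
  (gmul u.1.1 v.1.1, gadd (gmul u.1.1 v.1.2) (gmul u.1.2 v.2), gmul u.2 v.2).
Definition Acst (c : K) : Aelt := (gcst c, [::], gcst c).

Inductive term : Type :=
| Var of nat
| Cst of K
| Add of term & term
| Mul of term & term.

Fixpoint evalA (ev : nat -> Aelt) (t : term) : Aelt :=
  match t with
  | Var i => ev i
  | Cst c => Acst c
  | Add a b => Aadd (evalA ev a) (evalA ev b)
  | Mul a b => Amul (evalA ev a) (evalA ev b)
  end.

Definition inTA (t : term) : Prop :=
  forall ev : nat -> Aelt, (forall i, inA (ev i)) -> Ais0 (evalA ev t).

Fixpoint vars_lt (n : nat) (t : term) : bool :=
  match t with
  | Var i => (i < n)%N
  | Cst _ => true
  | Add a b | Mul a b => vars_lt n a && vars_lt n b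
  end.

Fixpoint subst (s : nat -> term) (t : term) : term :=
  match t with
  | Var i => s i
  | Cst c => Cst c
  | Add a b => Add (subst s a) (subst s b)
  | Mul a b => Mul (subst s a) (subst s b)
  end.

(* f is a polynomial identity of F_n(A) = K<x_1..x_n>/(K<x_1..x_n> ∩ T(A)):
   every substitution of the variables by elements of F_n(A) (i.e. classes
   of polynomials in x_1..x_n) gives 0, i.e. the substituted polynomial
   lies in T(A). *)
Definition PI_relfree (n : nat) (f : term) : Prop :=
  forall s : nat -> term, (forall i, vars_lt n (s i)) -> inTA (subst s f).

Definition tcomm (a b : term) : term := Add (Mul a b) (Mul (Cst (-1)) (Mul b a)).
Definition tsum (l : seq term) : term := foldr Add (Cst 0) l.
Definition tprod (l : seq term) : term := foldr Mul (Cst 1) l.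

(* variables are 0-indexed: Var i stands for x_{i+1} *)
Definition f3 (m n : nat) : term :=
  tsum [seq Mul (Cst ((-1) ^+ odd_perm s))
          (Mul (iter (m - n - 1) (fun u => tcomm u (Var 0))
                     (Var (s (inord 0))))
               (tprod [seq tcomm (Var (s (inord (2 * j + 1))))
                                 (Var (s (inord (2 * j + 2))))
                      | j <- iota 0 n./2]))
       | s <- enum {perm 'I_n.+1}].

End Defs.

(* Main.v *)
Require Import Defs.
From mathcomp Require Import all_boot all_order all_algebra all_fingroup.
From mathcomp Require Import ring zify.
Set Implicit Arguments. Unset Strict Implicit. Unset Printing Implicit Defensive.
Import GRing.Theory.
Local Open Scope ring_scope.

Definition L (K : fieldType) (x : grass K) (f : seq nat -> K) : K :=
  \sum_(p <- x) f p.2 * p.1.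

Lemma L_nil (K : fieldType) (f : seq nat -> K) : L [::] f = 0.
Proof. by rewrite /L big_nil. Qed.

Lemma L_cat (K : fieldType) (x y : grass K) f : L (x ++ y) f = L x f + L y f.
Proof. by rewrite /L big_cat. Qed.

Lemma L_gadd (K : fieldType) (x y : grass K) f : L (gadd x y) f = L x f + L y f.
Proof. by rewrite /L big_cat. Qed.

Lemma L_cons (K : fieldType) c w (x : grass K) f : L ((c, w) :: x) f = f w * c + L x f.
Proof. by rewrite /L big_cons. Qed.

Lemma L_ext (K : fieldType) (x : grass K) f g : (forall w, f w = g w) -> L x f = L x g.
Proof. by move=> H; rewrite /L; apply: eq_bigr => p _; rewrite H. Qed.

Lemma L_0 (K : fieldType) (x : grass K) f : (forall w, f w = 0) -> L x f = 0.
Proof. by move=> H; rewrite /L big1 // => p _; rewrite H mul0r. Qed.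

Lemma L_scale (K : fieldType) (x : grass K) f c : L x (fun w => c * f w) = c * L x f.
Proof. by rewrite /L mulr_sumr; apply: eq_bigr => p _; rewrite mulrA. Qed.

Lemma L_gmul (K : fieldType) (x y : grass K) f :
  L (gmul x y) f = L x (fun w => L y (fun v => f (w ++ v))).
Proof.
elim: x => [|[c w] x IH]; first by rewrite /gmul /= !L_nil.
rewrite /gmul /= L_cat -/(gmul x y) IH L_cons; congr (_ + _).
rewrite /L big_map mulr_suml; apply: eq_bigr => q _ /=; ring.
Qed.

Lemma gmul0l (K : fieldType) (y : grass K) : gmul [::] y = [::].
Proof. by []. Qed.
Arguments gmul : simpl never.
Opaque gmul.

Lemma L_gmul_cst_l (K : fieldType) c (y : grass K) f : L (gmul (gcst c) y) f = L y f * c.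
Proof. by rewrite L_gmul /gcst L_cons L_nil addr0. Qed.

Lemma L_gmul_cst_r (K : fieldType) c (x : grass K) f : L (gmul x (gcst c)) f = L x f * c.
Proof.
rewrite L_gmul (@L_ext _ _ _ (fun w => c * f w)); last first.
  by move=> w; rewrite /gcst L_cons L_nil addr0 cats0 mulrC.
by rewrite L_scale mulrC.
Qed.

Lemma L_gmul_nil_r (K : fieldType) (x : grass K) f : L (gmul x [::]) f = 0.
Proof. by rewrite L_gmul; apply: L_0 => w; rewrite L_nil. Qed.

Lemma L_gmul_single_r (K : fieldType) c v (x : grass K) f :
  L (gmul x [:: (c, v)]) f = L x (fun w => f (w ++ v)) * c.
Proof.
rewrite L_gmul (@L_ext _ _ _ (fun w => c * f (w ++ v))); last first.
  by move=> w; rewrite L_cons L_nil addr0 mulrC.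
by rewrite L_scale mulrC.
Qed.

Definition chi (K : fieldType) (S w : seq nat) : K :=
  if uniq w && (sort leq w == S) then (-1) ^+ ninv w else 0.

Lemma gcoefE (K : fieldType) (x : grass K) S : gcoef x S = L x (chi K S).
Proof.
rewrite /gcoef /L big_mkcond; apply: eq_bigr => p _; rewrite /chi.
by case: ifP => _; rewrite ?mul0r.
Qed.

Definition ev (K : fieldType) (i : nat) : Aelt K :=
  (if i == 0%N then gcst 1 else [::], if i == 1%N then gcst 1 else [::], [:: (1, [:: i])]).

Definition sb (K : fieldType) (n i : nat) : term K :=
  if (i < n)%N then Var K i else if i == n then Mul (Var K 0) (Var K 1) else Var K 0.
Arguments sb : simpl never.

Definition uw (n i : nat) : seq nat :=
  if (i < n)%N then [:: i] else if i == n then [:: 0; 1]%N else [:: 0%N].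

Lemma slot2 (K : fieldType) n i (h : seq nat -> K) :
  L (evalA (@ev K) (sb K n i)).2 h = h (uw n i).
Proof.
rewrite /sb /uw; case: ifP => _; first by rewrite /= L_cons L_nil mulr1 addr0.
case: ifP => _ /=; rewrite ?L_gmul L_cons L_nil ?L_cons ?L_nil; by rewrite ?mulr1 ?addr0.
Qed.

Definition cm (K : fieldType) (t : term K) : term K := tcomm t (Var K 0).

Lemma step11 (K : fieldType) (U : term K) g : L (evalA (@ev K) (cm U)).1.1 g = 0.
Proof.
rewrite /= L_gadd L_gmul_cst_r !L_gmul_cst_l; ring.
Qed.

Lemma step12 (K : fieldType) (U : term K) g :
  L (evalA (@ev K) (cm U)).1.2 g =
  L (evalA (@ev K) U).1.2 (fun w => g (w ++ [:: 0%N])) - L (evalA (@ev K) U).1.2 g.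
Proof.
rewrite /= L_gadd L_gadd L_gmul_nil_r L_gmul_single_r L_gadd L_gmul_cst_l L_gadd
  L_gmul_cst_l !gmul0l !L_nil; ring.
Qed.

Lemma C12_max (K : fieldType) k (g : seq nat -> K) :
  (forall w, (0 \in w)%N -> g w = 0) ->
  L (evalA (@ev K) (iter k (@cm K) (Mul (Var K 0) (Var K 1)))).1.2 g = (-1) ^+ k * g [::].
Proof.
elim: k g => [|k IH] g Hg.
  by rewrite /= L_gadd L_gmul_cst_l gmul0l /gcst L_cons !L_nil; ring.
rewrite iterS step12 !IH //; last first.
  by move=> w _; apply: Hg; rewrite mem_cat mem_seq1 eqxx orbT.
rewrite /= (Hg [:: 0%N]) ?mem_seq1 // exprS; ring.
Qed.

Lemma C12_zero (K : fieldType) k (g : seq nat -> K) :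
  L (evalA (@ev K) (iter k (@cm K) (Var K 0))).1.2 g = 0.
Proof.
elim: k g => [|k IH] g; first by rewrite /= L_nil.
by rewrite iterS step12 !IH subr0.
Qed.

Definition tp (K : fieldType) (l : seq (nat * nat)) : term K :=
  tprod [seq tcomm (Var K p.1) (Var K p.2) | p <- l].

Definition FL (n : nat) (l : seq (nat * nat)) : seq nat :=
  flatten [seq uw n p.1 ++ uw n p.2 | p <- l].

Lemma comm22 (K : fieldType) n a b (H : seq nat -> K) :
  L (evalA (@ev K) (subst (sb K n) (tcomm (Var K a) (Var K b)))).2 H =
  H (uw n a ++ uw n b) - H (uw n b ++ uw n a).
Proof.
rewrite /= L_gadd L_gmul_cst_l !L_gmul !slot2; ring.
Qed.

Lemma P22_van (K : fieldType) n l (H : seq nat -> K) :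
  (forall w, perm_eq w (FL n l) -> H w = 0) ->
  L (evalA (@ev K) (subst (sb K n) (tp K l))).2 H = 0.
Proof.
elim: l H => [|[a b] l IH] H HH.
  by rewrite /= /gcst L_cons L_nil addr0 (HH [::]) ?mul0r.
rewrite [tp K _]/= [evalA _ _]/= L_gmul comm22 !IH ?subrr //.
  move=> v pv; apply: HH; rewrite /FL /= -/(FL n l).
  by apply: perm_cat pv; rewrite perm_catC.
move=> v pv; apply: HH; rewrite /FL /= -/(FL n l).
by rewrite perm_cat2l.
Qed.

Definition altf (K : fieldType) (h : seq nat -> K) :=
  forall x y a b, h (x ++ a :: b :: y) = - h (x ++ b :: a :: y).

Lemma P22_alt (K : fieldType) n l (h H : seq nat -> K) x :
  altf h -> all (fun k => (k < n)%N) (flatten [seq [:: p.1; p.2] | p <- l]) ->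
  (forall v, H v = h (x ++ v)) ->
  L (evalA (@ev K) (subst (sb K n) (tp K l))).2 H = 2 ^+ size l * h (x ++ FL n l).
Proof.
move=> Ah.
elim: l H x => [|[a b] l IH] H x Hall HH.
  by rewrite /= /gcst L_cons L_nil addr0 HH /FL /= cats0; ring.
rewrite /= in Hall; case/andP: Hall => ha /andP [hb Hall].
rewrite [tp K _]/= [evalA _ _]/= L_gmul comm22.
rewrite (IH _ (x ++ (uw n a ++ uw n b))) //; last by move=> v; rewrite HH !catA.
rewrite (IH _ (x ++ (uw n b ++ uw n a))) //; last by move=> v; rewrite HH !catA.
rewrite /FL /= -/(FL n l) /uw ha hb /= -!catA /= Ah exprS; ring.
Qed.

Lemma perm_swap2 (x y : seq nat) a b : perm_eq (x ++ a :: b :: y) (x ++ b :: a :: y).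
Proof. by rewrite perm_cat2l; apply/seq.permP => p /=; rewrite addnCA. Qed.

Lemma ninv_swap (K : fieldType) (x y : seq nat) a b : a != b ->
  (-1) ^+ ninv (x ++ a :: b :: y) = - (-1) ^+ ninv (x ++ b :: a :: y) :> K.
Proof.
move=> ab; elim: x => [|c x IH] /=.
  rewrite !exprD; case: ltngtP ab => // _ _ /=; rewrite ?expr0 ?expr1; ring.
have /seq.permP pc := perm_swap2 x y a b.
by rewrite (pc (fun z => z < c)%N) !exprD IH mulrN.
Qed.

Lemma chi_alt (K : fieldType) S : altf (chi K S).
Proof.
move=> x y a b; have pe := perm_swap2 x y a b.
have se : sort leq (x ++ a :: b :: y) = sort leq (x ++ b :: a :: y).
  by apply/(perm_sortP leq_total leq_trans anti_leq).
rewrite /chi (perm_uniq pe) se; case: ifP => [/andP [u _]|_]; last by rewrite oppr0.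
apply: ninv_swap; move: u; rewrite cat_uniq /= inE.
by case/and3P => _ _ /andP [/norP [ba _] _]; rewrite eq_sym.
Qed.

Lemma chi_nuniq (K : fieldType) S w : ~~ uniq w -> chi K S w = 0.
Proof. by rewrite /chi => /negbTE ->. Qed.

Lemma flatten_cons' (T : Type) (x : seq T) s : flatten (x :: s) = x ++ flatten s.
Proof. by []. Qed.

Lemma flatten_pairs (G : nat -> seq nat) k j0 :
  flatten [seq G (2 * j + 1)%N ++ G (2 * j + 2)%N | j <- iota j0 k] =
  flatten [seq G i | i <- iota (2 * j0 + 1)%N (2 * k)%N].
Proof.
elim: k j0 => [|k IH] j0 //.
have e1 : (2 * k.+1 = (2 * k).+2)%N by rewrite mulnS add2n.
rewrite e1 -[iota j0 k.+1]/(j0 :: iota j0.+1 k).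
rewrite -[iota _ (2 * k).+2]/(_ :: _ :: iota _ (2 * k)) !map_cons.
rewrite !flatten_cons' IH -catA.
have -> : (2 * j0 + 2 = (2 * j0 + 1).+1)%N by lia.
have -> : (2 * j0.+1 + 1 = (2 * j0 + 1).+2)%N by lia.
by [].
Qed.

Lemma bump_lt j x y : (bump j y < bump j x)%N = (y < x)%N.
Proof.
by rewrite /bump; apply/idP/idP => H; lia.
Qed.

Lemma ninv_bump j w : ninv (map (bump j) w) = ninv w.
Proof.
elim: w => //= x w ->; congr (_ + _)%N; rewrite count_map.
by apply: eq_count => y /=; rewrite bump_lt.
Qed.

Lemma count_lt_iota j N : (j <= N)%N -> count (fun y => (y < j)%N) (iota 0 N) = j.
Proof.
move=> jN; rewrite -(subnKC jN) iotaD count_cat.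
rewrite (eq_in_count (a2 := predT)); last by move=> y; rewrite mem_iota.
rewrite count_predT size_iota (eq_in_count (a2 := pred0)) ?count_pred0 ?addn0 //.
by move=> y; rewrite mem_iota add0n /= => /andP [h _]; rewrite ltnNge h.
Qed.

Lemma permW N (s : 'S_N) : perm_eq [seq val (s i) | i <- enum 'I_N] (iota 0 N).
Proof.
rewrite -val_enum_ord (map_comp val s); apply: perm_map.
apply: uniq_perm; first by rewrite map_inj_uniq ?enum_uniq //; exact: perm_inj.
  exact: enum_uniq.
move=> x; rewrite mem_enum; apply/mapP; exists (s^-1 x)%g; first by rewrite mem_enum.
by rewrite permKV.
Qed.

Lemma perm_decomp N (s : 'S_N.+1) : exists s' : 'S_N, s = lift_perm ord0 (s ord0) s'.
Proof.
pose f (k : 'I_N) := odflt k (unlift (s ord0) (s (lift ord0 k))).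
have fE k : s (lift ord0 k) = lift (s ord0) (f k).
  rewrite /f; case: unliftP => [j -> // | /perm_inj/eqP].
  by rewrite eq_sym (negbTE (neq_lift _ _)).
have finj : injective f.
  by move=> k1 k2 e; apply: (@lift_inj _ ord0); apply: (@perm_inj _ s); rewrite !fE e.
exists (perm finj); apply/permP => x; case: (unliftP ord0 x) => [k ->|->].
  by rewrite lift_perm_lift permE fE.
by rewrite lift_perm_id.
Qed.

Lemma odd_perm_ninv N (s : 'S_N) :
  odd_perm s = odd (ninv [seq val (s i) | i <- enum 'I_N]).
Proof.
elim: N s => [|N IH] s.
  by rewrite enum_ord0 (permS0 s) odd_perm1.
have [s' ->] := perm_decomp s; set j := s ord0.
have E : [seq val (lift_perm ord0 j s' i) | i <- enum 'I_N.+1] =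
    val j :: map (bump j) [seq val (s' k) | k <- enum 'I_N].
  rewrite enum_ordSl /= lift_perm_id; congr (_ :: _); rewrite -!map_comp.
  by apply: eq_map => k /=; rewrite lift_perm_lift.
rewrite odd_lift_perm /= IH E /= ninv_bump count_map oddD.
congr (_ (+) _).
rewrite (eq_count (a2 := fun y => (y < j)%N)); last first.
  by move=> y /=; rewrite /bump; apply/idP/idP => H; lia.
have /seq.permP pc := permW s'; rewrite pc count_lt_iota //.
by rewrite -ltnS.
Qed.

Lemma sb_0 (K : fieldType) n : (0 < n)%N -> sb K n 0 = Var K 0.
Proof. by rewrite /sb => ->. Qed.

Lemma sb_n (K : fieldType) n : sb K n n = Mul (Var K 0) (Var K 1).
Proof. by rewrite /sb ltnn eqxx. Qed.

Lemma subst_iter (K : fieldType) n k (t : term K) : (0 < n)%N ->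
  subst (sb K n) (iter k (@cm K) t) = iter k (@cm K) (subst (sb K n) t).
Proof.
move=> n0; elim: k => [|k IH] //.
by rewrite !iterS -IH /cm /= sb_0.
Qed.

Lemma L12_term (K : fieldType) n c (C P : term K) f :
  L (evalA (@ev K) (subst (sb K n) (Mul (Cst c) (Mul C P)))).1.2 f =
  c * (L (evalA (@ev K) (subst (sb K n) C)).1.1
         (fun w => L (evalA (@ev K) (subst (sb K n) P)).1.2 (fun v => f (w ++ v))) +
       L (evalA (@ev K) (subst (sb K n) C)).1.2
         (fun w => L (evalA (@ev K) (subst (sb K n) P)).2 (fun v => f (w ++ v)))).
Proof.
rewrite [in LHS]/= L_gadd L_gmul_cst_l gmul0l L_nil L_gadd !L_gmul; ring.
Qed.

Lemma L12_tsum (K : fieldType) n (l : seq (term K)) f :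
  L (evalA (@ev K) (subst (sb K n) (tsum l))).1.2 f =
  \sum_(t <- l) L (evalA (@ev K) (subst (sb K n) t)).1.2 f.
Proof.
elim: l => [|t l IH]; first by rewrite big_nil /= L_nil.
by rewrite big_cons /= L_gadd IH.
Qed.

Definition prs n (s : {perm 'I_n.+1}) : seq (nat * nat) :=
  [seq (nat_of_ord (s (inord (2 * j + 1)%N)), nat_of_ord (s (inord (2 * j + 2)%N)))
  | j <- iota 0 n./2].

Definition Tt (K : fieldType) (m n : nat) (s : {perm 'I_n.+1}) : term K :=
  Mul (Cst ((-1) ^+ odd_perm s))
      (Mul (iter (m - n - 1)%N (@cm K) (Var K (s ord0))) (tp K (prs s))).

Lemma inord0 n : (inord 0 : 'I_n.+1) = ord0.
Proof. by apply: val_inj; rewrite /= inordK. Qed.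

Lemma f3E (K : fieldType) m n :
  f3 K m n = tsum [seq @Tt K m n s | s <- enum {perm 'I_n.+1}].
Proof.
rewrite /f3; congr tsum; apply: eq_map => s.
by rewrite /Tt /tp /prs -map_comp inord0.
Qed.

Lemma termval (K : fieldType) m n (s : {perm 'I_n.+1}) :
  (2 <= n)%N -> ~~ odd n -> (n + 2 <= m)%N ->
  L (evalA (@ev K) (subst (sb K n) (@Tt K m n s))).1.2 (chi K (iota 0 n)) =
  if s ord0 == ord_max then (-1) ^+ (m - n - 1)%N * 2 ^+ n./2 else 0.
Proof.
move=> n2 ne mn.
have n0 : (0 < n)%N by lia.
pose a k := nat_of_ord (s (inord k)).
pose tl := [seq a k | k <- iota 1 n].
have n2h : (2 * n./2)%N = n.
  by move: (odd_double_half n); rewrite (negbTE ne) add0n mul2n.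
have Wl : [seq nat_of_ord (s i) | i <- enum 'I_n.+1] = nat_of_ord (s ord0) :: tl.
  have -> : [seq nat_of_ord (s i) | i <- enum 'I_n.+1] = [seq a k | k <- iota 0 n.+1].
    by rewrite -val_enum_ord -map_comp; apply: eq_map => i /=; rewrite /a inord_val.
  by rewrite /= /a inord0.
have Hperm : perm_eq (nat_of_ord (s ord0) :: tl) (iota 0 n.+1) by rewrite -Wl; exact: permW.
have FLe : FL n (prs s) = flatten [seq uw n x | x <- tl].
  rewrite /FL /prs -map_comp (flatten_pairs (fun k => uw n (a k)) n./2 0) n2h.
  by rewrite /tl -map_comp.
have pairsE : flatten [seq [:: p.1; p.2] | p <- prs s] = tl.
  rewrite /prs -map_comp (flatten_pairs (fun k => [:: a k]) n./2 0) n2h.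
  by rewrite flatten_map1.
have r1 : (m - n - 1 = (m - n - 2).+1)%N by lia.
have C11z : forall t g, L (evalA (@ev K) (iter (m - n - 1) (@cm K) t)).1.1 g = 0.
  by move=> t g; rewrite r1 iterS step11.
rewrite /Tt L12_term subst_iter // C11z add0r.
case: (eqVneq (s ord0) ord_max) => [Emax | Nmax].
- have ptl : perm_eq tl (iota 0 n).
    rewrite -(perm_cons n); apply: perm_trans (_ : perm_eq _ (iota 0 n.+1)) _.
      by move: Hperm; rewrite Emax.
    by rewrite -addn1 iotaD perm_catC /=.
  have tl0 : (0 \in tl)%N by rewrite (perm_mem ptl) mem_iota.
  have tllt : all (fun k => (k < n)%N) tl.
    by apply/allP => x; rewrite (perm_mem ptl) mem_iota.
  have FLt : FL n (prs s) = tl.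
    rewrite FLe (_ : [seq uw n x | x <- tl] = [seq [:: x] | x <- tl]) ?flatten_seq1 //.
    by apply/eq_in_map => x /(allP tllt) xn; rewrite /uw xn.
  have -> : subst (sb K n) (Var K (s ord0)) = Mul (Var K 0) (Var K 1) by rewrite Emax /= sb_n.
  rewrite C12_max; last first.
    move=> w w0; apply: P22_van => v pv; apply: chi_nuniq.
    rewrite cat_uniq; apply/negP => /and3P [_ /hasPn H _].
    by move: (H 0%N); rewrite (perm_mem pv) FLt tl0 w0 => /(_ isT).
  rewrite (P22_alt (h := chi K (iota 0 n)) (x := [::])); [|exact: chi_alt|by rewrite pairsE|by []].
  rewrite FLt /= size_map size_iota.
  have -> : chi K (iota 0 n) tl = (-1) ^+ ninv tl.
    rewrite /chi (perm_uniq ptl) iota_uniq.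
    have -> : sort leq tl = iota 0 n.
      rewrite (_ : sort leq tl = sort leq (iota 0 n)); last first.
        by apply/(perm_sortP leq_total leq_trans anti_leq).
      by apply: sorted_sort; [exact: leq_trans | exact: iota_sorted].
    by rewrite eqxx.
  have par : odd_perm s = odd (ninv tl).
    rewrite odd_perm_ninv Wl Emax /=.
    rewrite (eq_in_count (a2 := predT)); last by move=> x /(allP tllt).
    by rewrite count_predT size_map size_iota oddD (negbTE ne).
  rewrite -[(-1) ^+ ninv tl]signr_odd -par.
  have sq : (-1) ^+ odd_perm s * (-1) ^+ odd_perm s = 1 :> K.
    by rewrite -signr_addb addbb.
  by rewrite mulrCA; congr (_ * _); rewrite mulrCA sq mulr1.
-
  case: (eqVneq (s ord0) ord0) => [E0 | N0].
    have -> : subst (sb K n) (Var K (s ord0)) = Var K 0 by rewrite E0 /= sb_0.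
    by rewrite C12_zero mulr0.
  have tlu : uniq tl by move: (perm_uniq Hperm); rewrite iota_uniq => /andP [].
  have intl x : (x <= n)%N -> x != nat_of_ord (s ord0) -> x \in tl.
    move=> xn xs; have : x \in iota 0 n.+1 by rewrite mem_iota.
    by rewrite -(perm_mem Hperm) inE (negbTE xs).
  have t0 : 0%N \in tl.
    apply: intl => //; apply/eqP => e; move: N0; rewrite -val_eqE /= -e.
    by rewrite eqxx.
  have tn : n \in tl.
    apply: intl => //; apply/eqP => e; move: Nmax; rewrite -val_eqE /= -e.
    by rewrite eqxx.
  have nu : ~~ uniq (FL n (prs s)).
    rewrite FLe.
    have p1 := perm_to_rem t0.
    have nr : n \in rem 0%N tl by rewrite (mem_rem_uniq _ tlu) inE tn andbT; lia.
    have p2 := perm_to_rem nr.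
    have p3 : perm_eq tl [:: 0%N, n & rem n (rem 0%N tl)].
      by apply: perm_trans p1 _; rewrite perm_cons.
    rewrite (perm_uniq (perm_flatten (perm_map (uw n) p3))) /= /uw n0 ltnn eqxx /=.
    by [].
  rewrite (@L_0 _ _ _); first by rewrite mulr0.
  move=> w; apply: P22_van => v pv; apply: chi_nuniq.
  by rewrite cat_uniq (perm_uniq pv) (negbTE nu) !andbF.
Qed.

Theorem lemma3p7 (K : fieldType) (charK0 : [pchar K]%R =i pred0)
  (n m : nat) (n_ge2 : (2 <= n)%N) (n_even : ~~ odd n) (m_ge : (n + 2 <= m)%N) :
  ~ PI_relfree n (f3 K m n).
Proof.
move=> H.
have n0 : (0 < n)%N by lia.
have Hv : forall i, vars_lt n (sb K n i).
  move=> i; rewrite /sb; case: ifP => [//|_]; case: ifP => _ /=; lia.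
have Ha : forall i, inA (@ev K i).
  move=> i S oS; rewrite /ev /=; case: ifP => _; last by rewrite /gcoef big_nil.
  rewrite /gcoef big_cons big_nil /=; case: eqP => // eS.
  by move: oS; rewrite -eS.
have [_ H12 _] := H (sb K n) Hv (@ev K) Ha.
move: (H12 (iota 0 n)); rewrite gcoefE f3E L12_tsum big_map.
rewrite (eq_bigr (fun s : {perm 'I_n.+1} =>
   if s ord0 == ord_max then (-1) ^+ (m - n - 1)%N * 2 ^+ n./2 else 0 : K));
  last by move=> s _; apply: termval.
rewrite big_enum /= -big_mkcond sumr_const.
have hc := (pcharf0P K).1 charK0.
apply/eqP; rewrite -[_ *+ #|_|]mulr_natr !mulf_eq0 signr_eq0 /= expf_eq0 !hc /= andbF /= -lt0n.
apply/card_gt0P; exists (tperm ord0 ord_max).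
by rewrite /in_mem /= tpermL; apply/eqnP.
Qed.
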